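(* Let $\alpha>1$. For all $a,b>0$, \[\sup_{x\ge1}\left|x\left(F_\alpha(\tfrac xa)-F_\alpha(\tfrac xb)\right)\right|\le|a-b|\,G_\alpha,\qquad \sup_{x\ge1}\left|x\left(D_xF_\alpha(\tfrac xa)-D_xF_\alpha(\tfrac xb)\right)\right|\le|a-b|\,L_\alpha.\]
   Context: $F_\alpha(x)=\frac{\sin(\frac{2\pi}{1+\alpha})}{\pi}\int_0^x\frac{dy}{1+y^2-2y\cos(\frac{2\pi}{1+\alpha})}$, $K_\alpha(x)=xF_\alpha'(x)=\frac{\sin(\frac{2\pi}{1+\alpha})}\pi\frac{x}{1+x^2-2x\cos(\frac{2\pi}{1+\alpha})}$, $D_x=x\frac d{dx}$. $G_\alpha=\sup_{x\ge0}|F_\alpha'(x)|$ (equal to $\frac1\pi\sin\frac{2\pi}{1+\alpha}$ for $1<\alpha\le3$ and $\frac{1}{\pi\sin\frac{2\pi}{1+\alpha}}$ for $\alpha>3$), and $L_\alpha=\sup_{x\ge0}|K_\alpha'(x)|$. *)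

(* Defs.v *)
From Stdlib Require Import Reals.
From Coquelicot Require Import Coquelicot.
Open Scope R_scope.

Definition theta (alpha : R) : R := 2 * PI / (1 + alpha).

Definition Falpha (alpha : R) (x : R) : R :=
  sin (theta alpha) / PI *
  RInt (fun y => / (1 + y ^ 2 - 2 * y * cos (theta alpha))) 0 x.

Definition Dxop (f : R -> R) (x : R) : R := x * Derive f x.

(* K_alpha(x) = x F_alpha'(x), given explicitly *)
Definition Kalpha (alpha : R) (x : R) : R :=
  sin (theta alpha) / PI * (x / (1 + x ^ 2 - 2 * x * cos (theta alpha))).

Definition Galpha (alpha : R) : Rbar :=
  Lub_Rbar (fun v => exists x, 0 <= x /\ v = Rabs (Derive (Falpha alpha) x)).

Definition Lalpha (alpha : R) : Rbar :=
  Lub_Rbar (fun v => exists x, 0 <= x /\ v = Rabs (Derive (Kalpha alpha) x)).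

Definition sup_ge1_abs (g : R -> R) : Rbar :=
  Lub_Rbar (fun v => exists x, 1 <= x /\ v = Rabs (g x)).

(* Main.v *)
Require Import Defs.
From Stdlib Require Import Reals Lra Psatz.
From Coquelicot Require Import Coquelicot.
Open Scope R_scope.

Section S.
Variable alpha : R.
Hypothesis halpha : 1 < alpha.

Notation th := (theta alpha).

Lemma th_bounds : 0 < th < PI.
Proof.
  unfold theta. pose proof PI_RGT_0.
  split.
  - apply Rdiv_lt_0_compat; lra.
  - apply (Rmult_lt_reg_r (1+alpha)); [lra|].
    unfold Rdiv; rewrite Rmult_assoc, Rinv_l by lra. nra.
Qed.

Lemma sn_pos : 0 < sin th.
Proof. apply sin_gt_0; apply th_bounds. Qed.

Definition Dn (y : R) := 1 + y ^ 2 - 2 * y * cos (theta alpha).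

Lemma Dn_pos y : 0 < Dn y.
Proof.
  unfold Dn. pose proof sn_pos. pose proof (sin2_cos2 th).
  unfold Rsqr in *.
  revert H H0. generalize (sin th) (cos th). intros s c H1 H2.
  assert (0 <= (y-c)^2) by (apply pow2_ge_0). assert (0 < s*s) by (apply Rmult_lt_0_compat; lra). nra.
Qed.

Definition Fp (y : R) := sin (theta alpha) / PI * / Dn y.

Lemma F_deriv y : is_derive (Falpha alpha) y (Fp y).
Proof.
  unfold Falpha, Fp.
  pose (f := fun y => / (1 + y ^ 2 - 2 * y * cos (theta alpha))).
  change (fun y => / (1 + y ^ 2 - 2 * y * cos (theta alpha))) with f.
  assert (Hc : forall z, continuous f z).
  { intro z. apply (@ex_derive_continuous R_AbsRing R_NormedModule f z). unfold f. auto_derive.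
    pose proof (Dn_pos z). unfold Dn in *. lra. }
  replace (sin (theta alpha) / PI * / Dn y) with (sin (theta alpha) / PI * f y)
    by reflexivity.
  apply (is_derive_scal (fun x => RInt f 0 x)).
  apply (is_derive_RInt f (fun x => RInt f 0 x) 0 y); [|apply Hc].
  apply filter_forall. intro b'. apply (@RInt_correct R_CompleteNormedModule). apply ex_RInt_continuous.
  intros; apply Hc.
Qed.

Definition Kp (y : R) := sin (theta alpha) / PI * ((1 - y^2) / (Dn y)^2).

Lemma K_deriv y : is_derive (Kalpha alpha) y (Kp y).
Proof.
  unfold Kalpha, Kp. pose proof (Dn_pos y). unfold Dn in *.
  pose proof PI_RGT_0. auto_derive; [lra|]. field. split; lra.
Qed.

Lemma Dx_K y : Dxop (Falpha alpha) y = Kalpha alpha y.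
Proof.
  unfold Dxop. rewrite (is_derive_unique _ _ _ (F_deriv y)).
  unfold Fp, Kalpha. pose proof (Dn_pos y). unfold Dn in *. pose proof PI_RGT_0. field. split; lra.
Qed.

Lemma Dn_scale x s : 0 < x -> 0 < s ->
  Dn (x / s) = (x^2 + s^2 - 2*x*s*cos (theta alpha)) / s^2.
Proof. intros; unfold Dn; field; lra. Qed.

Lemma N_pos x s : 0 < x -> 0 < s -> 0 < x^2 + s^2 - 2*x*s*cos (theta alpha).
Proof.
  intros. pose proof (Dn_pos (x/s)). rewrite Dn_scale in H1 by lra.
  assert (0 < s^2) by (apply pow_lt; lra).
  apply (Rmult_lt_compat_r (s^2)) in H1; auto.
  unfold Rdiv in H1. rewrite Rmult_0_l, Rmult_assoc, Rinv_l in H1; lra.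
Qed.

Lemma Fp_sym x s : 0 < x -> 0 < s ->
  x * ((- x / s^2) * Fp (x / s)) = - Fp (s / x).
Proof.
  intros. unfold Fp. rewrite (Dn_scale x s), (Dn_scale s x) by lra.
  pose proof (N_pos x s H H0).
  replace (s^2 + x^2 - 2*s*x*cos (theta alpha)) with (x^2 + s^2 - 2*x*s*cos (theta alpha)) by ring.
  pose proof PI_RGT_0. field. repeat split; lra.
Qed.

Lemma Kp_sym x s : 0 < x -> 0 < s ->
  x * ((- x / s^2) * Kp (x / s)) = Kp (s / x).
Proof.
  intros. unfold Kp. rewrite (Dn_scale x s), (Dn_scale s x) by lra.
  pose proof (N_pos x s H H0).
  replace (s^2 + x^2 - 2*s*x*cos (theta alpha)) with (x^2 + s^2 - 2*x*s*cos (theta alpha)) by ring.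
  pose proof PI_RGT_0. field. repeat split; lra.
Qed.
End S.

Lemma mvt_bound (g g' : R -> R) a b M : 0 < a -> 0 < b ->
  (forall s, 0 < s -> is_derive g s (g' s)) ->
  (forall s, 0 < s -> Rabs (g' s) <= M) ->
  Rabs (g a - g b) <= M * Rabs (a - b).
Proof.
  intros ha hb hd hM.
  assert (gen : forall a b, 0 < a -> a < b -> Rabs (g a - g b) <= M * Rabs (a - b)).
  { clear a b ha hb. intros a b ha hab.
    destruct (MVT_cor2 g g' a b hab) as [c [Hc1 Hc2]].
    { intros c Hc. apply is_derive_Reals. apply hd. lra. }
    rewrite <- Rabs_Ropp, Ropp_minus_distr, Hc1, Rabs_mult.
    rewrite <- (Rabs_Ropp (a - b)), Ropp_minus_distr.
    apply Rmult_le_compat_r; [apply Rabs_pos|]. apply hM. lra. }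
  destruct (Rtotal_order a b) as [h|[h|h]].
  - apply gen; lra.
  - subst. rewrite !Rminus_diag, Rabs_R0. pose proof (hM b hb).
    pose proof (Rabs_pos (g' b)). lra.
  - rewrite <- Rabs_Ropp, Ropp_minus_distr, <- (Rabs_Ropp (a - b)), Ropp_minus_distr.
    apply gen; lra.
Qed.

Lemma rbar_key (v c : R) (G : Rbar) (S : R -> Prop) (w0 : R) :
  is_ub_Rbar S G -> S w0 -> 0 <= c ->
  (forall M, is_ub_Rbar S (Finite M) -> v <= c * M) -> (c = 0 -> v <= 0) ->
  Rbar_le v (Rbar_mult c G).
Proof.
  intros hub hw hc hM h0.
  destruct G as [g| |].
  - simpl. apply hM. exact hub.
  - destruct (Req_dec c 0) as [e|e].
    + subst. rewrite Rbar_mult_0_l. simpl. auto.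
    + unfold Rbar_mult, Rbar_mult'. destruct (Rle_dec 0 c); [|lra].
      destruct (Rle_lt_or_eq_dec 0 c r); [simpl; auto|lra].
  - exfalso. specialize (hub w0 hw). simpl in hub. exact hub.
Qed.

Lemma lub_le (S : R -> Prop) (B : Rbar) :
  (forall v, S v -> Rbar_le v B) -> Rbar_le (Lub_Rbar S) B.
Proof. intros h. apply (proj2 (Lub_Rbar_correct S)). exact h. Qed.

Theorem lemma5p4 (alpha a b : R) (halpha : 1 < alpha) (ha : 0 < a) (hb : 0 < b) :
  Rbar_le (sup_ge1_abs (fun x => x * (Falpha alpha (x / a) - Falpha alpha (x / b))))
          (Rbar_mult (Finite (Rabs (a - b))) (Galpha alpha)) /\
  Rbar_le (sup_ge1_abs (fun x => x * (Dxop (Falpha alpha) (x / a) - Dxop (Falpha alpha) (x / b))))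
          (Rbar_mult (Finite (Rabs (a - b))) (Lalpha alpha)).
Proof.
  split; apply lub_le; intros v [x [hx ->]].
  - apply (rbar_key _ _ _ _ (Rabs (Derive (Falpha alpha) 0)) (proj1 (Lub_Rbar_correct _))).
    + exists 0. split; [lra|reflexivity].
    + apply Rabs_pos.
    + intros M hM. rewrite Rmult_minus_distr_l, (Rmult_comm (Rabs (a - b))).
      apply (mvt_bound (fun s => x * Falpha alpha (x / s))
                       (fun s => x * ((- x / s^2) * Fp alpha (x / s)))); auto.
      * intros s hs. apply (is_derive_scal (fun s => Falpha alpha (x / s))).
        apply (is_derive_comp (Falpha alpha) (fun s => x / s)).
        { apply F_deriv; auto. }
        { auto_derive; [lra|]. field. lra. }
      * intros s hs. rewrite Fp_sym by lra. rewrite Rabs_Ropp.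
        rewrite <- (is_derive_unique _ _ _ (F_deriv alpha halpha (s / x))).
        apply (hM (Rabs (Derive (Falpha alpha) (s / x)))).
        exists (s / x). split; [|reflexivity].
        apply Rlt_le, Rdiv_lt_0_compat; lra.
    + intros e. apply Rabs_eq_0 in e. assert (a = b) by lra. subst.
      rewrite Rminus_diag, Rmult_0_r, Rabs_R0. lra.
  - apply (rbar_key _ _ _ _ (Rabs (Derive (Kalpha alpha) 0)) (proj1 (Lub_Rbar_correct _))).
    + exists 0. split; [lra|reflexivity].
    + apply Rabs_pos.
    + intros M hM. rewrite !Dx_K by auto. rewrite Rmult_minus_distr_l, (Rmult_comm (Rabs (a - b))).
      apply (mvt_bound (fun s => x * Kalpha alpha (x / s))
                       (fun s => x * ((- x / s^2) * Kp alpha (x / s)))); auto.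
      * intros s hs. apply (is_derive_scal (fun s => Kalpha alpha (x / s))).
        apply (is_derive_comp (Kalpha alpha) (fun s => x / s)).
        { apply K_deriv; auto. }
        { auto_derive; [lra|]. field. lra. }
      * intros s hs. rewrite Kp_sym by lra.
        rewrite <- (is_derive_unique _ _ _ (K_deriv alpha halpha (s / x))).
        apply (hM (Rabs (Derive (Kalpha alpha) (s / x)))).
        exists (s / x). split; [|reflexivity].
        apply Rlt_le, Rdiv_lt_0_compat; lra.
    + intros e. apply Rabs_eq_0 in e. assert (a = b) by lra. subst.
      rewrite Rminus_diag, Rmult_0_r, Rabs_R0. lra.
Qed.
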